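(* Let $\epsilon\in\mathbb C\setminus\{0\}$, $\eta_1(x,y;z)=(1-xz)^{-\epsilon}e^{yz}=\sum_{k\ge0}F_1^k(x,y)z^k$, so $F^k_1(x,y)=\sum_{i+j=k}\frac{(\epsilon)_i}{i!\,j!}x^iy^j$ with $(\epsilon)_i=\epsilon(\epsilon+1)\cdots(\epsilon+i-1)$. Then: (a) $x\frac{\partial^2\eta_1}{\partial x\partial y}=\frac{\partial\eta_1}{\partial x}-\epsilon\frac{\partial\eta_1}{\partial y}$, and $\frac{\partial F_1^{k+1}}{\partial y}=F_1^k$, $\frac1\epsilon\frac{\partial F_1^{k+1}}{\partial x}=\sum_{i+j=k}x^iF_1^j$ for all $k\ge0$. (b) Let $m\ge1$, $\Phi_1(\mathbf t;x,y)=\sum_{k=0}^m t_kF_1^{k+1}(x,y)$, and let $(u_1(\mathbf t),u_2(\mathbf t))$ be a $C^1$ map with $\partial_x\Phi_1=\partial_y\Phi_1=0$ at $(x,y)=(u_1,u_2)$, such that at this point $u_1\neq0$, $\partial_x^2\Phi_1\neq0$ and $\partial_y^2\Phi_1\neq0$. Then for $k=1,\dots,m$, \[ \frac{\partial u_1}{\partial t_k}=\lambda_1^k\frac{\partial u_1}{\partial t_0},\qquad \frac{\partial u_2}{\partial t_k}=\lambda_2^k\frac{\partial u_2}{\partial t_0}, \qquad \lambda_1^k=\sum_{i+j=k}u_1^iF_1^j(u_1,u_2),\quad \lambda_2^k=F_1^k(u_1,u_2). \] In particular for $k=1$: $\lambda_1^1=(1+\epsilon)u_1+u_2$, $\lambda_2^1=\epsilon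 u_1+u_2$. *)

(* Defs.v *)
From Stdlib Require Import Reals Arith Factorial ClassicalEpsilon.
Open Scope R_scope.

Definition Cx : Type := (R * R)%type.
Definition RtoC (a : R) : Cx := (a, 0).
Definition Czero : Cx := (0, 0).
Definition Cone : Cx := (1, 0).
Definition Cadd (z w : Cx) : Cx := (fst z + fst w, snd z + snd w).
Definition Copp (z : Cx) : Cx := (- fst z, - snd z).
Definition Csub (z w : Cx) : Cx := Cadd z (Copp w).
Definition Cmul (z w : Cx) : Cx :=
  (fst z * fst w - snd z * snd w, fst z * snd w + snd z * fst w).
Definition Cinv (z : Cx) : Cx :=
  (fst z / (fst z ^ 2 + snd z ^ 2), - snd z / (fst z ^ 2 + snd z ^ 2)).
Definition Cdiv (z w : Cx) : Cx := Cmul z (Cinv w).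
Definition Cnorm (z : Cx) : R := sqrt (fst z ^ 2 + snd z ^ 2).
Fixpoint Cpow (z : Cx) (n : nat) : Cx :=
  match n with O => Cone | S n' => Cmul z (Cpow z n') end.
Definition Cnat (n : nat) : Cx := RtoC (INR n).

(* Csum f n = f 0 + ... + f (n-1) *)
Fixpoint Csum (f : nat -> Cx) (n : nat) : Cx :=
  match n with O => Czero | S n' => Cadd (Csum f n') (f n') end.
Fixpoint Cprod (f : nat -> Cx) (n : nat) : Cx :=
  match n with O => Cone | S n' => Cmul (Cprod f n') (f n') end.

Definition poch (e : Cx) (i : nat) : Cx := Cprod (fun l => Cadd e (Cnat l)) i.

Definition F1 (eps : Cx) (k : nat) (x y : Cx) : Cx :=
  Csum (fun i => Cmul (Cdiv (poch eps i)
                            (Cmul (Cnat (fact i)) (Cnat (fact (k - i)))))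
                      (Cmul (Cpow x i) (Cpow y (k - i)))) (S k).

Definition Clim0 (g : Cx -> Cx) (L : Cx) : Prop :=
  forall e, 0 < e -> exists d, 0 < d /\
    forall h, h <> Czero -> Cnorm h < d -> Cnorm (Csub (g h) L) < e.

Definition Cderiv (f : Cx -> Cx) (z L : Cx) : Prop :=
  Clim0 (fun h => Cdiv (Csub (f (Cadd z h)) (f z)) h) L.

(* the derivative value (meaningful when it exists; it is unique) *)
Definition theC (P : Cx -> Prop) : Cx := epsilon (inhabits Czero) P.

Definition pdx (f : Cx -> Cx -> Cx) (x y L : Cx) : Prop := Cderiv (fun s => f s y) x L.
Definition pdy (f : Cx -> Cx -> Cx) (x y L : Cx) : Prop := Cderiv (fun s => f x s) y L.
Definition dx (f : Cx -> Cx -> Cx) (x y : Cx) : Cx := theC (pdx f x y).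
Definition dy (f : Cx -> Cx -> Cx) (x y : Cx) : Cx := theC (pdy f x y).

(* parameters t = (t_0, ..., t_m) are encoded as t : nat -> Cx *)
Definition upd (t : nat -> Cx) (k : nat) (s : Cx) : nat -> Cx :=
  fun j => if Nat.eqb j k then s else t j.
Definition pdt (u : (nat -> Cx) -> Cx) (t : nat -> Cx) (k : nat) (L : Cx) : Prop :=
  Cderiv (fun s => u (upd t k s)) (t k) L.
Definition dt (u : (nat -> Cx) -> Cx) (k : nat) (t : nat -> Cx) : Cx := theC (pdt u t k).

Definition near (m : nat) (r : R) (t t' : nat -> Cx) : Prop :=
  forall j, (j <= m)%nat -> Cnorm (Csub (t' j) (t j)) < r.

Definition isOpen (m : nat) (D : (nat -> Cx) -> Prop) : Prop :=
  forall t, D t -> exists r, 0 < r /\ forall t', near m r t t' -> D t'.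

Definition C1_on (m : nat) (D : (nat -> Cx) -> Prop) (u : (nat -> Cx) -> Cx) : Prop :=
  forall k, (k <= m)%nat ->
    (forall t, D t -> pdt u t k (dt u k t)) /\
    (forall t, D t -> forall e, 0 < e -> exists r, 0 < r /\
        forall t', D t' -> near m r t t' -> Cnorm (Csub (dt u k t') (dt u k t)) < e).

Definition Phi1 (eps : Cx) (m : nat) (t : nat -> Cx) (x y : Cx) : Cx :=
  Csum (fun k => Cmul (t k) (F1 eps (S k) x y)) (S m).

Definition lam1 (eps : Cx) (k : nat) (a b : Cx) : Cx :=
  Csum (fun i => Cmul (Cpow a i) (F1 eps (k - i) a b)) (S k).
Definition lam2 (eps : Cx) (k : nat) (a b : Cx) : Cx := F1 eps k a b.

(* Main.v *)
Require Import Defs.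
From Stdlib Require Import Reals Arith Factorial ClassicalEpsilon FunctionalExtensionality Lra Psatz Field.
From Coquelicot Require Complex.
Open Scope R_scope.

Lemma Cft : field_theory Czero Cone Cadd Cmul Csub Copp Cdiv Cinv (@eq Cx).
Proof. exact Complex.C_field_theory. Qed.
Add Field Cxfield : Cft.

Lemma Cnorm_tri (z w : Cx) : Cnorm (Cadd z w) <= Cnorm z + Cnorm w.
Proof. exact (Complex.Cmod_triangle z w). Qed.
Lemma Cnorm_mul (z w : Cx) : Cnorm (Cmul z w) = Cnorm z * Cnorm w.
Proof. exact (Complex.Cmod_mult z w). Qed.
Lemma Cnorm_ge0 z : 0 <= Cnorm z.
Proof. exact (Complex.Cmod_ge_0 z). Qed.
Lemma Cnorm_eq0 z : Cnorm z = 0 -> z = Czero.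
Proof. exact (Complex.Cmod_eq_0 z). Qed.
Lemma Cnorm_0 : Cnorm Czero = 0.
Proof. exact Complex.Cmod_0. Qed.
Lemma Cnorm_pos z : z <> Czero -> 0 < Cnorm z.
Proof. intro H. exact (proj1 (Complex.Cmod_gt_0 z) H). Qed.

Lemma Clim0_ext g k L : (forall h, h <> Czero -> g h = k h) -> Clim0 g L -> Clim0 k L.
Proof.
  intros E H e He. destruct (H e He) as [d [Hd Hh]]. exists d; split; auto.
  intros h Hn Hl. rewrite <- E by auto. auto.
Qed.

Lemma Clim0_const c : Clim0 (fun _ => c) c.
Proof.
  intros e He. exists 1; split; [lra|]. intros h _ _.
  replace (Csub c c) with Czero by ring. rewrite Cnorm_0; auto.
Qed.

Lemma Clim0_id : Clim0 (fun h => h) Czero.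
Proof.
  intros e He. exists e; split; auto. intros h _ Hl.
  replace (Csub h Czero) with h by ring. auto.
Qed.

Lemma Clim0_add g k L M : Clim0 g L -> Clim0 k M ->
  Clim0 (fun h => Cadd (g h) (k h)) (Cadd L M).
Proof.
  intros Hg Hk e He.
  destruct (Hg (e/2)) as [d1 [Hd1 H1]]; [lra|].
  destruct (Hk (e/2)) as [d2 [Hd2 H2]]; [lra|].
  exists (Rmin d1 d2); split; [apply Rmin_pos; auto|].
  intros h Hn Hl.
  replace (Csub (Cadd (g h) (k h)) (Cadd L M)) with
    (Cadd (Csub (g h) L) (Csub (k h) M)) by ring.
  eapply Rle_lt_trans; [apply Cnorm_tri|].
  assert (A1 := H1 h Hn (Rlt_le_trans _ _ _ Hl (Rmin_l _ _))).
  assert (A2 := H2 h Hn (Rlt_le_trans _ _ _ Hl (Rmin_r _ _))).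
  lra.
Qed.

Lemma Clim0_mul g k L M : Clim0 g L -> Clim0 k M ->
  Clim0 (fun h => Cmul (g h) (k h)) (Cmul L M).
Proof.
  intros Hg Hk e He.
  set (e' := Rmin 1 (e / (1 + Cnorm L + Cnorm M))).
  assert (HL := Cnorm_ge0 L). assert (HM := Cnorm_ge0 M).
  assert (He' : 0 < e').
  { apply Rmin_pos; [lra|]. apply Rdiv_lt_0_compat; lra. }
  assert (He1 : e' <= 1) by apply Rmin_l.
  assert (He2 : e' * (1 + Cnorm L + Cnorm M) <= e).
  { assert (e' <= e / (1 + Cnorm L + Cnorm M)) by apply Rmin_r.
    apply (Rmult_le_compat_r (1 + Cnorm L + Cnorm M)) in H; [|lra].
    unfold Rdiv in H. rewrite Rmult_assoc, Rinv_l in H; lra. }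
  destruct (Hg e' He') as [d1 [Hd1 H1]].
  destruct (Hk e' He') as [d2 [Hd2 H2]].
  exists (Rmin d1 d2); split; [apply Rmin_pos; auto|].
  intros h Hn Hl.
  assert (A1 := H1 h Hn (Rlt_le_trans _ _ _ Hl (Rmin_l _ _))).
  assert (A2 := H2 h Hn (Rlt_le_trans _ _ _ Hl (Rmin_r _ _))).
  replace (Csub (Cmul (g h) (k h)) (Cmul L M)) with
    (Cadd (Cmul (Csub (g h) L) (Csub (k h) M))
      (Cadd (Cmul L (Csub (k h) M)) (Cmul M (Csub (g h) L)))) by ring.
  eapply Rle_lt_trans; [apply Cnorm_tri|].
  eapply Rle_lt_trans; [apply Rplus_le_compat_l, Cnorm_tri|].
  rewrite !Cnorm_mul.
  assert (B1 := Cnorm_ge0 (Csub (g h) L)). assert (B2 := Cnorm_ge0 (Csub (k h) M)).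
  nra.
Qed.

Lemma Clim0_unique g L1 L2 : Clim0 g L1 -> Clim0 g L2 -> L1 = L2.
Proof.
  intros H1 H2. destruct (Req_dec (Cnorm (Csub L1 L2)) 0) as [E|E].
  - apply Cnorm_eq0 in E. replace L1 with (Cadd (Csub L1 L2) L2) by ring. rewrite E. ring.
  - assert (P : 0 < Cnorm (Csub L1 L2)) by (assert (Q := Cnorm_ge0 (Csub L1 L2)); lra).
    set (e := Cnorm (Csub L1 L2) / 2).
    destruct (H1 e) as [d1 [Hd1 A1]]; [unfold e; lra|].
    destruct (H2 e) as [d2 [Hd2 A2]]; [unfold e; lra|].
    set (h := (Rmin d1 d2 / 2, 0) : Cx).
    assert (Hm : 0 < Rmin d1 d2) by (apply Rmin_pos; auto).
    assert (Hnh : Cnorm h = Rmin d1 d2 / 2).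
    { unfold h. change (Complex.Cmod (Complex.RtoC (Rmin d1 d2 / 2)) = Rmin d1 d2 / 2).
      rewrite Complex.Cmod_R. apply Rabs_right. lra. }
    assert (hn : h <> Czero).
    { intro Q. assert (Cnorm h = 0) by (rewrite Q; apply Cnorm_0). lra. }
    assert (l1 : Cnorm h < d1) by (rewrite Hnh; assert (Rmin d1 d2 <= d1) by apply Rmin_l; lra).
    assert (l2 : Cnorm h < d2) by (rewrite Hnh; assert (Rmin d1 d2 <= d2) by apply Rmin_r; lra).
    specialize (A1 h hn l1). specialize (A2 h hn l2).
    assert (T := Cnorm_tri (Csub (g h) L2) (Copp (Csub (g h) L1))).
    replace (Cadd (Csub (g h) L2) (Copp (Csub (g h) L1))) with (Csub L1 L2) in T by ring.
    assert (Cnorm (Copp (Csub (g h) L1)) = Cnorm (Csub (g h) L1)) by apply (Complex.Cmod_opp).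
    unfold e in *; lra.
Qed.
Lemma Clim0_eqL g L L' : Clim0 g L -> L = L' -> Clim0 g L'.
Proof. intros H E; subst; auto. Qed.
Lemma Cderiv_eqL f z L L' : Cderiv f z L -> L = L' -> Cderiv f z L'.
Proof. intros H E; subst; auto. Qed.

Lemma Cderiv_const c z : Cderiv (fun _ => c) z Czero.
Proof.
  unfold Cderiv. apply Clim0_ext with (fun _ => Czero); [|apply Clim0_const].
  intros h Hh; cbv beta. field. auto.
Qed.

Lemma Cderiv_id z : Cderiv (fun s => s) z Cone.
Proof.
  unfold Cderiv. apply Clim0_ext with (fun _ => Cone); [|apply Clim0_const].
  intros h Hh; cbv beta. field. auto.
Qed.

Lemma Cderiv_add f g z L M : Cderiv f z L -> Cderiv g z M ->
  Cderiv (fun s => Cadd (f s) (g s)) z (Cadd L M).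
Proof.
  unfold Cderiv; intros Hf Hg.
  eapply Clim0_ext; [|apply (Clim0_add _ _ _ _ Hf Hg)].
  intros h Hh; cbv beta. field. auto.
Qed.

Lemma Cderiv_mul f g z L M : Cderiv f z L -> Cderiv g z M ->
  Cderiv (fun s => Cmul (f s) (g s)) z (Cadd (Cmul L (g z)) (Cmul (f z) M)).
Proof.
  unfold Cderiv; intros Hf Hg.
  set (Qf := fun h => Cdiv (Csub (f (Cadd z h)) (f z)) h) in *.
  set (Qg := fun h => Cdiv (Csub (g (Cadd z h)) (g z)) h) in *.
  assert (Hgz : Clim0 (fun h => Cadd (g z) (Cmul h (Qg h))) (Cadd (g z) (Cmul Czero M))).
  { apply Clim0_add. apply Clim0_const. apply Clim0_mul; auto. apply Clim0_id. }
  assert (X := Clim0_add _ _ _ _ (Clim0_mul _ _ _ _ Hf Hgz)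
                 (Clim0_mul _ _ _ _ (Clim0_const (f z)) Hg)).
  eapply Clim0_eqL; [eapply Clim0_ext; [|exact X]|ring].
  intros h Hh; unfold Qf, Qg; cbv beta. field. auto.
Qed.

Lemma Cderiv_unique f z L1 L2 : Cderiv f z L1 -> Cderiv f z L2 -> L1 = L2.
Proof. apply Clim0_unique. Qed.

Lemma Cderiv_local f g z L r : 0 < r -> Cderiv f z L ->
  (forall h, Cnorm h < r -> f (Cadd z h) = g (Cadd z h)) -> Cderiv g z L.
Proof.
  intros Hr H E.
  assert (Ez : f z = g z).
  { replace z with (Cadd z Czero) by ring. apply E. rewrite Cnorm_0; auto. }
  intros e He. destruct (H e He) as [d [Hd A]].
  exists (Rmin d r); split; [apply Rmin_pos; auto|].
  intros h Hn Hl. rewrite <- E, <- Ez by (eapply Rlt_le_trans; [exact Hl|apply Rmin_r]).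
  apply A; auto. eapply Rlt_le_trans; [exact Hl|apply Rmin_l].
Qed.

Lemma Cderiv_sum (f : nat -> Cx -> Cx) (f' : nat -> Cx) z n :
  (forall j, (j < n)%nat -> Cderiv (f j) z (f' j)) ->
  Cderiv (fun s => Csum (fun j => f j s) n) z (Csum f' n).
Proof.
  induction n; intros H; simpl.
  - apply Cderiv_const.
  - apply Cderiv_add; auto.
Qed.

Lemma Cnat_0 : Cnat 0 = Czero. Proof. reflexivity. Qed.
Lemma Cnat_1 : Cnat 1 = Cone. Proof. reflexivity. Qed.
Lemma Cnat_S n : Cnat (S n) = Cadd (Cnat n) Cone.
Proof. unfold Cnat, RtoC, Cadd, Cone. rewrite S_INR. cbn [fst snd]. f_equal; ring. Qed.
Lemma Cnat_mul a b : Cnat (a * b) = Cmul (Cnat a) (Cnat b).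
Proof. unfold Cnat, RtoC, Cmul. rewrite mult_INR. cbn [fst snd]. f_equal; ring. Qed.
Lemma Cnat_neq0 n : n <> O -> Cnat n <> Czero.
Proof. intros H E. apply (not_0_INR n H). unfold Cnat, RtoC in E. injection E; auto. Qed.

Lemma Cderiv_pow a z a' n : Cderiv a z a' ->
  Cderiv (fun s => Cpow (a s) n) z (Cmul (Cmul (Cnat n) (Cpow (a z) (n - 1))) a').
Proof.
  intros Ha. induction n; simpl.
  - eapply Cderiv_eqL; [apply Cderiv_const|]. rewrite Cnat_0. ring.
  - eapply Cderiv_eqL; [apply Cderiv_mul; eauto|].
    destruct n.
    + simpl. rewrite Cnat_0, Cnat_1. ring.
    + replace (S (S n) - 1)%nat with (S n) by lia. replace (S n - 1)%nat with n in * by lia.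
      simpl. rewrite (Cnat_S (S n)). ring.
Qed.

Definition Smooth2 (f fx fy : Cx -> Cx -> Cx) : Prop :=
  forall a b z a' b', Cderiv a z a' -> Cderiv b z b' ->
    Cderiv (fun s => f (a s) (b s)) z
      (Cadd (Cmul (fx (a z) (b z)) a') (Cmul (fy (a z) (b z)) b')).

Lemma S_ext f fx fy g gx gy : Smooth2 f fx fy ->
  (forall x y, f x y = g x y) -> (forall x y, fx x y = gx x y) ->
  (forall x y, fy x y = gy x y) -> Smooth2 g gx gy.
Proof.
  intros H E1 E2 E3 a b z a' b' Ha Hb.
  assert (Q : (fun s => g (a s) (b s)) = (fun s => f (a s) (b s))).
  { apply functional_extensionality; intro; auto. }
  rewrite Q, <- E2, <- E3. auto.
Qed.

Lemma S_const c : Smooth2 (fun _ _ => c) (fun _ _ => Czero) (fun _ _ => Czero).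
Proof. intros a b z a' b' _ _. eapply Cderiv_eqL; [apply Cderiv_const|]. cbv beta; ring. Qed.

Lemma S_x : Smooth2 (fun x _ => x) (fun _ _ => Cone) (fun _ _ => Czero).
Proof. intros a b z a' b' Ha _. eapply Cderiv_eqL; [exact Ha|]. cbv beta; ring. Qed.

Lemma S_y : Smooth2 (fun _ y => y) (fun _ _ => Czero) (fun _ _ => Cone).
Proof. intros a b z a' b' _ Hb. eapply Cderiv_eqL; [exact Hb|]. cbv beta; ring. Qed.

Lemma S_add f fx fy g gx gy : Smooth2 f fx fy -> Smooth2 g gx gy ->
  Smooth2 (fun x y => Cadd (f x y) (g x y)) (fun x y => Cadd (fx x y) (gx x y))
    (fun x y => Cadd (fy x y) (gy x y)).
Proof.
  intros Hf Hg a b z a' b' Ha Hb.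
  eapply Cderiv_eqL; [apply Cderiv_add; [apply Hf|apply Hg]; eauto|]. cbv beta; ring.
Qed.

Lemma S_mul f fx fy g gx gy : Smooth2 f fx fy -> Smooth2 g gx gy ->
  Smooth2 (fun x y => Cmul (f x y) (g x y))
    (fun x y => Cadd (Cmul (fx x y) (g x y)) (Cmul (f x y) (gx x y)))
    (fun x y => Cadd (Cmul (fy x y) (g x y)) (Cmul (f x y) (gy x y))).
Proof.
  intros Hf Hg a b z a' b' Ha Hb.
  eapply Cderiv_eqL; [apply Cderiv_mul; [apply Hf|apply Hg]; eauto|]. cbv beta; ring.
Qed.

Lemma S_sum (f fx fy : nat -> Cx -> Cx -> Cx) n :
  (forall i, Smooth2 (f i) (fx i) (fy i)) ->
  Smooth2 (fun x y => Csum (fun i => f i x y) n) (fun x y => Csum (fun i => fx i x y) n)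
    (fun x y => Csum (fun i => fy i x y) n).
Proof.
  intros H. induction n; simpl.
  - apply S_const.
  - apply S_add; auto.
Qed.

Lemma S_powx n : Smooth2 (fun x _ => Cpow x n)
  (fun x _ => Cmul (Cnat n) (Cpow x (n - 1))) (fun _ _ => Czero).
Proof.
  intros a b z a' b' Ha _. eapply Cderiv_eqL; [apply Cderiv_pow; eauto|]. cbv beta; ring.
Qed.

Lemma S_powy n : Smooth2 (fun _ y => Cpow y n)
  (fun _ _ => Czero) (fun _ y => Cmul (Cnat n) (Cpow y (n - 1))).
Proof.
  intros a b z a' b' _ Hb. eapply Cderiv_eqL; [apply Cderiv_pow; eauto|]. cbv beta; ring.
Qed.

Lemma S_scale c f fx fy : Smooth2 f fx fy ->
  Smooth2 (fun x y => Cmul c (f x y)) (fun x y => Cmul c (fx x y)) (fun x y => Cmul c (fy x y)).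
Proof.
  intros H. eapply S_ext; [exact (S_mul _ _ _ _ _ _ (S_const c) H)| | |]; intros; cbv beta; ring.
Qed.

Lemma S_pdx f fx fy : Smooth2 f fx fy -> forall x y, pdx f x y (fx x y).
Proof.
  intros H x y. unfold pdx.
  eapply Cderiv_eqL; [apply (H (fun s => s) (fun _ => y)); [apply Cderiv_id|apply Cderiv_const]|].
  cbv beta. ring.
Qed.

Lemma S_pdy f fx fy : Smooth2 f fx fy -> forall x y, pdy f x y (fy x y).
Proof.
  intros H x y. unfold pdy.
  eapply Cderiv_eqL; [apply (H (fun _ => x) (fun s => s)); [apply Cderiv_const|apply Cderiv_id]|].
  cbv beta. ring.
Qed.

Lemma theC_eq (P : Cx -> Prop) v : P v -> (forall w, P w -> w = v) -> theC P = v.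
Proof.
  intros Hv U. apply U. unfold theC. apply epsilon_spec. eauto.
Qed.

Lemma S_dx f fx fy : Smooth2 f fx fy -> dx f = fx.
Proof.
  intros H. apply functional_extensionality; intro x; apply functional_extensionality; intro y.
  unfold dx. apply theC_eq. apply (S_pdx _ _ _ H).
  intros w Hw. eapply Cderiv_unique; [exact Hw|apply (S_pdx _ _ _ H)].
Qed.

Lemma S_dy f fx fy : Smooth2 f fx fy -> dy f = fy.
Proof.
  intros H. apply functional_extensionality; intro x; apply functional_extensionality; intro y.
  unfold dy. apply theC_eq. apply (S_pdy _ _ _ H).
  intros w Hw. eapply Cderiv_unique; [exact Hw|apply (S_pdy _ _ _ H)].
Qed.

Lemma Csum_ext f g n : (forall i, (i < n)%nat -> f i = g i) -> Csum f n = Csum g n.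
Proof. induction n; intros H; simpl; auto. rewrite IHn by (intros; apply H; lia). rewrite H by lia. auto. Qed.

Lemma Csum_shift f n : Csum f (S n) = Cadd (f O) (Csum (fun i => f (S i)) n).
Proof. induction n; simpl in *. ring. rewrite IHn. ring. Qed.

Lemma Csum_add f g n : Csum (fun i => Cadd (f i) (g i)) n = Cadd (Csum f n) (Csum g n).
Proof. induction n; simpl. ring. rewrite IHn. ring. Qed.

Lemma Csum_mul_l c f n : Csum (fun i => Cmul c (f i)) n = Cmul c (Csum f n).
Proof. induction n; simpl. ring. rewrite IHn. ring. Qed.

Definition cc eps i j := Cdiv (poch eps i) (Cmul (Cnat (fact i)) (Cnat (fact j))).
Definition Tm eps n i (x y : Cx) := Cmul (cc eps i (n - i)) (Cmul (Cpow x i) (Cpow y (n - i))).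
Definition Tx eps n i (x y : Cx) :=
  Cmul (cc eps i (n - i)) (Cmul (Cmul (Cnat i) (Cpow x (i - 1))) (Cpow y (n - i))).
Definition Ty eps n i (x y : Cx) :=
  Cmul (cc eps i (n - i)) (Cmul (Cpow x i) (Cmul (Cnat (n - i)) (Cpow y (n - i - 1)))).
Definition Fx eps n x y := Csum (fun i => Tx eps n i x y) (S n).
Definition Fy eps n x y := Csum (fun i => Ty eps n i x y) (S n).

Lemma T_smooth eps n i : Smooth2 (Tm eps n i) (Tx eps n i) (Ty eps n i).
Proof.
  eapply S_ext; [exact (S_scale (cc eps i (n-i)) _ _ _ (S_mul _ _ _ _ _ _ (S_powx i) (S_powy (n-i))))| | |];
  intros; unfold Tm, Tx, Ty; cbv beta; ring.
Qed.

Lemma F_smooth eps n : Smooth2 (F1 eps n) (Fx eps n) (Fy eps n).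
Proof.
  eapply S_ext; [apply (S_sum (fun i => Tm eps n i)); intro i; apply T_smooth| | |];
  intros; reflexivity.
Qed.

Lemma fact_Cnz n : Cnat (fact n) <> Czero.
Proof. apply Cnat_neq0. apply fact_neq_0. Qed.

Lemma cc_Sr eps i j : Cmul (cc eps i (S j)) (Cnat (S j)) = cc eps i j.
Proof.
  unfold cc. change (fact (S j)) with (S j * fact j)%nat. rewrite Cnat_mul.
  assert (A := fact_Cnz i). assert (B := fact_Cnz j). assert (C := Cnat_neq0 (S j) ltac:(lia)).
  field. auto.
Qed.

Lemma cc_Sl eps i j : Cmul (cc eps (S i) j) (Cnat (S i)) = Cmul (Cadd eps (Cnat i)) (cc eps i j).
Proof.
  unfold cc. change (fact (S i)) with (S i * fact i)%nat. rewrite Cnat_mul.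
  change (poch eps (S i)) with (Cmul (poch eps i) (Cadd eps (Cnat i))).
  assert (A := fact_Cnz i). assert (B := fact_Cnz j). assert (C := Cnat_neq0 (S i) ltac:(lia)).
  field. auto.
Qed.

Definition LL eps n (x y : Cx) := lam1 eps n x y.
Definition GG eps n x y := Csum (fun i => Cmul (Cadd eps (Cnat i)) (Tm eps n i x y)) (S n).

Lemma F0 eps x y : F1 eps 0 x y = Cone.
Proof.
  unfold F1. simpl. unfold poch. simpl. change (Cnat 1) with Cone. field.
  intro H; injection H; intros; lra.
Qed.

Lemma Csum_S f n : Csum f (S n) = Cadd (Csum f n) (f n).
Proof. reflexivity. Qed.

Lemma Fy_S eps n x y : Fy eps (S n) x y = F1 eps n x y.
Proof.
  unfold Fy. rewrite Csum_S. unfold Ty at 2. rewrite Nat.sub_diag, Cnat_0.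
  unfold F1. 
  transitivity (Csum (fun i => Ty eps (S n) i x y) (S n)); [ring|].
  apply Csum_ext. intros i Hi. unfold Ty, Tm.
  replace (S n - i)%nat with (S (n - i)) by lia.
  replace (S (n - i) - 1)%nat with (n - i)%nat by lia.
  fold (cc eps i (n - i)). rewrite <- (cc_Sr eps i (n - i)). ring.
Qed.

Lemma Fx_S eps n x y : Fx eps (S n) x y = GG eps n x y.
Proof.
  unfold Fx. rewrite Csum_shift. unfold Tx at 1. rewrite Cnat_0.
  unfold GG.
  transitivity (Csum (fun i => Tx eps (S n) (S i) x y) (S n)); [ring|].
  apply Csum_ext. intros i Hi. unfold Tx, Tm.
  change (S n - S i)%nat with (n - i)%nat.
  replace (S i - 1)%nat with i by lia.
  transitivity (Cmul (Cmul (cc eps (S i) (n-i)) (Cnat (S i))) (Cmul (Cpow x i) (Cpow y (n-i)))); [ring|].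
  rewrite cc_Sl. ring.
Qed.

Lemma GG_S eps n x y : GG eps (S n) x y = Cadd (Cmul eps (F1 eps (S n) x y)) (Cmul x (GG eps n x y)).
Proof.
  transitivity (Cadd (Cmul eps (F1 eps (S n) x y))
     (Csum (fun i => Cmul (Cnat i) (Tm eps (S n) i x y)) (S (S n)))).
  { unfold GG. change (F1 eps (S n) x y) with (Csum (fun i => Tm eps (S n) i x y) (S (S n))).
    rewrite <- Csum_mul_l, <- Csum_add. apply Csum_ext; intros; ring. }
  f_equal. rewrite Csum_shift, Cnat_0. unfold GG. rewrite <- Csum_mul_l.
  transitivity (Csum (fun i => Cmul (Cnat (S i)) (Tm eps (S n) (S i) x y)) (S n)); [ring|].
  apply Csum_ext. intros i Hi. unfold Tm.
  change (S n - S i)%nat with (n - i)%nat.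
  simpl Cpow.
  transitivity (Cmul x (Cmul (Cmul (cc eps (S i) (n-i)) (Cnat (S i))) (Cmul (Cpow x i) (Cpow y (n-i))))); [ring|].
  rewrite cc_Sl. ring.
Qed.

Lemma LL_S eps n x y : LL eps (S n) x y = Cadd (F1 eps (S n) x y) (Cmul x (LL eps n x y)).
Proof.
  unfold LL, lam1. rewrite Csum_shift. simpl Cpow. change (S n - 0)%nat with (S n).
  f_equal; [ring|]. rewrite <- Csum_mul_l. apply Csum_ext. intros i Hi.
  change (S n - S i)%nat with (n - i)%nat. simpl Cpow. ring.
Qed.

Lemma GG_LL eps n x y : GG eps n x y = Cmul eps (LL eps n x y).
Proof.
  induction n.
  - unfold GG, LL, lam1, F1, Tm, cc. cbn [Csum Nat.sub Cpow]. rewrite Cnat_0. ring.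
  - rewrite GG_S, IHn, LL_S. ring.
Qed.

Lemma Fx_SL eps n x y : Fx eps (S n) x y = Cmul eps (LL eps n x y).
Proof. rewrite Fx_S. apply GG_LL. Qed.

Lemma Fx_0 eps x y : Fx eps 0 x y = Czero.
Proof. unfold Fx, Tx. cbn [Csum Nat.sub]. rewrite Cnat_0. ring. Qed.

Lemma Fy_0 eps x y : Fy eps 0 x y = Czero.
Proof. unfold Fy, Ty. cbn [Csum Nat.sub]. rewrite Cnat_0. ring. Qed.

Lemma LL_0 eps x y : LL eps 0 x y = Cone.
Proof. unfold LL, lam1. cbn [Csum Nat.sub Cpow]. rewrite F0. ring. Qed.

Definition MM eps n x y := Csum (fun i => Cmul (Cpow x i) (Fy eps (n - i) x y)) (S n).

Lemma MM_0 eps x y : MM eps 0 x y = Czero.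
Proof. unfold MM. cbn [Csum Nat.sub Cpow]. rewrite Fy_0. ring. Qed.

Lemma MM_S eps n x y : MM eps (S n) x y = LL eps n x y.
Proof.
  unfold MM. rewrite Csum_S, Nat.sub_diag, Fy_0.
  unfold LL, lam1.
  transitivity (Csum (fun i => Cmul (Cpow x i) (Fy eps (S n - i) x y)) (S n)); [ring|].
  apply Csum_ext. intros i Hi.
  replace (S n - i)%nat with (S (n - i)) by lia. rewrite Fy_S. reflexivity.
Qed.

Lemma MM_rel eps n x y : Cmul x (MM eps n x y) = Csub (LL eps n x y) (F1 eps n x y).
Proof.
  destruct n.
  - rewrite MM_0. unfold LL, lam1. cbn [Csum Nat.sub Cpow]. ring.
  - rewrite MM_S, LL_S. ring.
Qed.

Definition LLx eps n x y := Csum (fun i =>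
  Cadd (Cmul (Cmul (Cnat i) (Cpow x (i - 1))) (F1 eps (n - i) x y))
       (Cmul (Cpow x i) (Fx eps (n - i) x y))) (S n).

Lemma LL_smooth eps n : Smooth2 (LL eps n) (LLx eps n) (MM eps n).
Proof.
  eapply S_ext.
  - apply (S_sum (fun i x y => Cmul (Cpow x i) (F1 eps (n - i) x y))).
    intro i. exact (S_mul _ _ _ _ _ _ (S_powx i) (F_smooth eps (n - i))).
  - intros; reflexivity.
  - intros; reflexivity.
  - intros. unfold MM. apply Csum_ext; intros; ring.
Qed.

Lemma dxF_S eps n : dx (F1 eps (S n)) = (fun x y => Cmul eps (LL eps n x y)).
Proof.
  rewrite (S_dx _ _ _ (F_smooth eps (S n))).
  apply functional_extensionality; intro; apply functional_extensionality; intro.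
  apply Fx_SL.
Qed.
Lemma dyF_S eps n : dy (F1 eps (S n)) = F1 eps n.
Proof.
  rewrite (S_dy _ _ _ (F_smooth eps (S n))).
  apply functional_extensionality; intro; apply functional_extensionality; intro.
  apply Fy_S.
Qed.
Lemma dxF_0 eps : dx (F1 eps 0) = (fun _ _ => Czero).
Proof.
  rewrite (S_dx _ _ _ (F_smooth eps 0)).
  apply functional_extensionality; intro; apply functional_extensionality; intro.
  apply Fx_0.
Qed.
Lemma dyF_0 eps : dy (F1 eps 0) = (fun _ _ => Czero).
Proof.
  rewrite (S_dy _ _ _ (F_smooth eps 0)).
  apply functional_extensionality; intro; apply functional_extensionality; intro.
  apply Fy_0.
Qed.

Lemma partA eps (Heps : eps <> Czero) k x y :
     (pdx (F1 eps k) x y (dx (F1 eps k) x y) /\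
      pdy (F1 eps k) x y (dy (F1 eps k) x y) /\
      exists Lxy, pdy (dx (F1 eps k)) x y Lxy /\
        Cmul x Lxy = Csub (dx (F1 eps k) x y) (Cmul eps (dy (F1 eps k) x y))) /\
     pdy (F1 eps (S k)) x y (F1 eps k x y) /\
     (exists L, pdx (F1 eps (S k)) x y L /\
        Cmul (Cinv eps) L = Csum (fun i => Cmul (Cpow x i) (F1 eps (k - i) x y)) (S k)).
Proof.
  split; [split; [|split]|split].
  - rewrite (S_dx _ _ _ (F_smooth eps k)). apply (S_pdx _ _ _ (F_smooth eps k)).
  - rewrite (S_dy _ _ _ (F_smooth eps k)). apply (S_pdy _ _ _ (F_smooth eps k)).
  - destruct k as [|n].
    + exists Czero. rewrite dxF_0, dyF_0. split; [exact (Cderiv_const Czero y)|ring].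
    + exists (Cmul eps (MM eps n x y)). rewrite dxF_S, dyF_S. split.
      * apply (S_pdy _ _ _ (S_scale eps _ _ _ (LL_smooth eps n))).
      * transitivity (Cmul eps (Cmul x (MM eps n x y))); [ring|]. rewrite MM_rel. ring.
  - unfold pdy. eapply Cderiv_eqL; [exact (S_pdy _ _ _ (F_smooth eps (S k)) x y)|]. apply Fy_S.
  - exists (Fx eps (S k) x y). split; [apply (S_pdx _ _ _ (F_smooth eps (S k)))|].
    rewrite Fx_SL. unfold LL, lam1. field. auto.
Qed.

Lemma Csum_mul_r c f n : Csum (fun i => Cmul (f i) c) n = Cmul (Csum f n) c.
Proof. induction n; simpl. ring. rewrite IHn. ring. Qed.

Lemma Csum_sub f g n : Csum (fun i => Csub (f i) (g i)) n = Csub (Csum f n) (Csum g n).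
Proof. induction n; simpl. ring. rewrite IHn. ring. Qed.

Lemma Csum_delta (X : nat -> Cx) k n :
  Csum (fun j => Cmul (if Nat.eqb j k then Cone else Czero) (X j)) n =
  if Nat.ltb k n then X k else Czero.
Proof.
  induction n as [|n IHn]; [reflexivity|]. rewrite Csum_S, IHn.
  destruct (Nat.eqb n k) eqn:E.
  - apply Nat.eqb_eq in E; subst. rewrite (proj2 (Nat.ltb_ge k k)) by lia.
    rewrite (proj2 (Nat.ltb_lt k (S k))) by lia. ring.
  - apply Nat.eqb_neq in E. destruct (Nat.ltb k n) eqn:E2.
    + apply Nat.ltb_lt in E2. rewrite (proj2 (Nat.ltb_lt k (S n))) by lia.
      ring.
    + apply Nat.ltb_ge in E2. rewrite (proj2 (Nat.ltb_ge k (S n))) by lia.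
      ring.
Qed.

Lemma upd_same t k : upd t k (t k) = t.
Proof.
  apply functional_extensionality; intro j. unfold upd.
  destruct (Nat.eqb j k) eqn:E; auto. apply Nat.eqb_eq in E; subst; auto.
Qed.

Lemma chain_sum (t : nat -> Cx) k m (G Gx Gy : nat -> Cx -> Cx -> Cx) a b a' b' :
  (forall j, Smooth2 (G j) (Gx j) (Gy j)) -> Cderiv a (t k) a' -> Cderiv b (t k) b' ->
  (k <= m)%nat ->
  Cderiv (fun s => Csum (fun j => Cmul (upd t k s j) (G j (a s) (b s))) (S m)) (t k)
    (Cadd (G k (a (t k)) (b (t k)))
       (Cadd (Cmul (Csum (fun j => Cmul (t j) (Gx j (a (t k)) (b (t k)))) (S m)) a')
             (Cmul (Csum (fun j => Cmul (t j) (Gy j (a (t k)) (b (t k)))) (S m)) b'))).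
Proof.
  intros HG Ha Hb Hk.
  eapply Cderiv_eqL.
  - apply (Cderiv_sum _ (fun j => Cadd (Cmul (if Nat.eqb j k then Cone else Czero)
                                            (G j (a (t k)) (b (t k))))
                   (Cmul (t j) (Cadd (Cmul (Gx j (a (t k)) (b (t k))) a')
                                      (Cmul (Gy j (a (t k)) (b (t k))) b'))))).
    intros j _.
    assert (Hu : Cderiv (fun s => upd t k s j) (t k) (if Nat.eqb j k then Cone else Czero)).
    { unfold upd. destruct (Nat.eqb j k). apply Cderiv_id. apply Cderiv_const. }
    eapply Cderiv_eqL; [apply Cderiv_mul; [exact Hu|apply HG; eauto]|].
    cbv beta. rewrite upd_same. reflexivity.
  - rewrite Csum_add, Csum_delta. rewrite (proj2 (Nat.ltb_lt k (S m))) by lia.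
    f_equal. rewrite <- Csum_mul_r, <- Csum_mul_r, <- Csum_add.
    apply Csum_ext; intros; ring.
Qed.

Lemma deriv_zero_local g z L r : 0 < r -> Cderiv g z L ->
  (forall h, Cnorm h < r -> g (Cadd z h) = Czero) -> L = Czero.
Proof.
  intros Hr H E.
  assert (H' : Cderiv (fun _ => Czero) z L) by (eapply Cderiv_local; eauto).
  eapply Cderiv_unique; [exact H'|apply Cderiv_const].
Qed.

Lemma solve_lin P e L a ak : P <> Czero -> Cadd e (Cmul P a) = Czero ->
  Cadd (Cmul e L) (Cmul P ak) = Czero -> ak = Cmul L a.
Proof.
  intros HP H1 H2.
  transitivity (Cadd (Cdiv (Csub (Cadd (Cmul e L) (Cmul P ak)) (Cmul L (Cadd e (Cmul P a)))) P)
                     (Cmul L a)); [field; auto|].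
  rewrite H1, H2. field. auto.
Qed.

Lemma F1_1 eps x y : F1 eps 1 x y = Cadd (Cmul eps x) y.
Proof.
  unfold F1, poch. cbn [Csum Nat.sub Cpow Cprod fact Nat.mul Nat.add].
  rewrite Cnat_1, Cnat_0.
  assert (Cone <> Czero) by (intro H; injection H; intros; lra).
  field. auto.
Qed.

Definition Px eps m (t : nat -> Cx) x y := Csum (fun j => Cmul (t j) (Cmul eps (LL eps j x y))) (S m).
Definition Py eps m (t : nat -> Cx) x y := Csum (fun j => Cmul (t j) (F1 eps j x y)) (S m).
Definition Pxx eps m (t : nat -> Cx) x y := Csum (fun j => Cmul (t j) (Cmul eps (LLx eps j x y))) (S m).
Definition Pxy eps m (t : nat -> Cx) x y := Csum (fun j => Cmul (t j) (Cmul eps (MM eps j x y))) (S m).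
Definition Pyy eps m (t : nat -> Cx) x y := Csum (fun j => Cmul (t j) (Fy eps j x y)) (S m).

Lemma Fx_MM eps j x y : Fx eps j x y = Cmul eps (MM eps j x y).
Proof. destruct j. rewrite Fx_0, MM_0; ring. rewrite Fx_SL, MM_S; reflexivity. Qed.

Lemma Phi_smooth eps m t : Smooth2 (Phi1 eps m t) (Px eps m t) (Py eps m t).
Proof.
  eapply S_ext.
  - apply (S_sum (fun j x y => Cmul (t j) (F1 eps (S j) x y))).
    intro j. exact (S_scale (t j) _ _ _ (F_smooth eps (S j))).
  - intros; reflexivity.
  - intros. apply Csum_ext. intros. rewrite Fx_SL. reflexivity.
  - intros. apply Csum_ext. intros. rewrite Fy_S. reflexivity.
Qed.

Lemma Px_smooth eps m t : Smooth2 (Px eps m t) (Pxx eps m t) (Pxy eps m t).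
Proof.
  eapply S_ext.
  - apply (S_sum (fun j x y => Cmul (t j) (Cmul eps (LL eps j x y)))).
    intro j. exact (S_scale (t j) _ _ _ (S_scale eps _ _ _ (LL_smooth eps j))).
  - intros; reflexivity.
  - intros; reflexivity.
  - intros; reflexivity.
Qed.

Lemma Py_smooth eps m t : Smooth2 (Py eps m t) (Pxy eps m t) (Pyy eps m t).
Proof.
  eapply S_ext.
  - apply (S_sum (fun j x y => Cmul (t j) (F1 eps j x y))).
    intro j. exact (S_scale (t j) _ _ _ (F_smooth eps j)).
  - intros; reflexivity.
  - intros. apply Csum_ext. intros. rewrite Fx_MM. reflexivity.
  - intros; reflexivity.
Qed.

Lemma Pxy_rel eps m t x y :
  Cmul x (Pxy eps m t x y) = Csub (Px eps m t x y) (Cmul eps (Py eps m t x y)).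
Proof.
  unfold Pxy, Px, Py. rewrite <- Csum_mul_l, <- Csum_mul_l, <- Csum_sub.
  apply Csum_ext. intros j _.
  transitivity (Cmul (Cmul (t j) eps) (Cmul x (MM eps j x y))); [ring|].
  rewrite MM_rel. ring.
Qed.

Lemma near_upd m r t k h : 0 < r -> Cnorm h < r -> near m r t (upd t k (Cadd (t k) h)).
Proof.
  intros Hr Hh j _. unfold upd. destruct (Nat.eqb j k) eqn:E.
  - apply Nat.eqb_eq in E; subst. replace (Csub (Cadd (t k) h) (t k)) with h by ring. auto.
  - replace (Csub (t j) (t j)) with Czero by ring. rewrite Cnorm_0. auto.
Qed.

Lemma Cmul_reg x p : x <> Czero -> Cmul x p = Czero -> p = Czero.
Proof.
  intros Hx H. transitivity (Cmul (Cinv x) (Cmul x p)); [field; auto|]. rewrite H. ring.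
Qed.

Theorem mainTheorem8 (eps : Cx) (Heps : eps <> Czero) :
  (* (a) *)
  (forall (k : nat) (x y : Cx),
     (* coefficient of z^k in  x d^2 eta_1/dxdy = d eta_1/dx - eps d eta_1/dy *)
     (pdx (F1 eps k) x y (dx (F1 eps k) x y) /\
      pdy (F1 eps k) x y (dy (F1 eps k) x y) /\
      exists Lxy, pdy (dx (F1 eps k)) x y Lxy /\
        Cmul x Lxy = Csub (dx (F1 eps k) x y) (Cmul eps (dy (F1 eps k) x y))) /\
     pdy (F1 eps (S k)) x y (F1 eps k x y) /\
     (exists L, pdx (F1 eps (S k)) x y L /\
        Cmul (Cinv eps) L = Csum (fun i => Cmul (Cpow x i) (F1 eps (k - i) x y)) (S k))) /\
  (* (b) *)
  (forall (m : nat) (D : (nat -> Cx) -> Prop) (u1 u2 : (nat -> Cx) -> Cx),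
     (1 <= m)%nat -> isOpen m D -> C1_on m D u1 -> C1_on m D u2 ->
     (forall t, D t ->
        dx (Phi1 eps m t) (u1 t) (u2 t) = Czero /\
        dy (Phi1 eps m t) (u1 t) (u2 t) = Czero /\
        u1 t <> Czero /\
        dx (dx (Phi1 eps m t)) (u1 t) (u2 t) <> Czero /\
        dy (dy (Phi1 eps m t)) (u1 t) (u2 t) <> Czero) ->
     forall t, D t ->
       (forall k, (1 <= k <= m)%nat ->
          dt u1 k t = Cmul (lam1 eps k (u1 t) (u2 t)) (dt u1 0 t) /\
          dt u2 k t = Cmul (lam2 eps k (u1 t) (u2 t)) (dt u2 0 t)) /\
       lam1 eps 1 (u1 t) (u2 t) = Cadd (Cmul (Cadd Cone eps) (u1 t)) (u2 t) /\
       lam2 eps 1 (u1 t) (u2 t) = Cadd (Cmul eps (u1 t)) (u2 t)).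
Proof.
  split; [intros; apply partA; auto|].
  intros m D u1 u2 Hm HD H1 H2 Hcrit t Ht.
  assert (Crit : forall t', D t' -> Px eps m t' (u1 t') (u2 t') = Czero /\
                   Py eps m t' (u1 t') (u2 t') = Czero).
  { intros t' Ht'. destruct (Hcrit t' Ht') as [c1 [c2 _]].
    rewrite (S_dx _ _ _ (Phi_smooth eps m t')) in c1.
    rewrite (S_dy _ _ _ (Phi_smooth eps m t')) in c2. auto. }
  destruct (Hcrit t Ht) as [_ [_ [c3 [c4 c5]]]].
  rewrite (S_dx _ _ _ (Phi_smooth eps m t)), (S_dx _ _ _ (Px_smooth eps m t)) in c4.
  rewrite (S_dy _ _ _ (Phi_smooth eps m t)), (S_dy _ _ _ (Py_smooth eps m t)) in c5.
  set (x := u1 t) in *. set (y := u2 t) in *.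
  assert (Pxy0 : Pxy eps m t x y = Czero).
  { apply (Cmul_reg x); auto. rewrite Pxy_rel. destruct (Crit t Ht) as [A B].
    fold x y in A, B. rewrite A, B. ring. }
  destruct (HD t Ht) as [r [Hr Hr2]].
  assert (Ex : forall k, (k <= m)%nat ->
    Cadd (Cmul eps (LL eps k x y))
      (Cadd (Cmul (Pxx eps m t x y) (dt u1 k t)) (Cmul (Pxy eps m t x y) (dt u2 k t))) = Czero).
  { intros k Hk.
    eapply (deriv_zero_local
      (fun s => Csum (fun j => Cmul (upd t k s j)
          ((fun j x y => Cmul eps (LL eps j x y)) j (u1 (upd t k s)) (u2 (upd t k s)))) (S m))
      (t k) _ r Hr).
    - eapply Cderiv_eqL.
      + apply (chain_sum t k m (fun j x y => Cmul eps (LL eps j x y))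
                 (fun j x y => Cmul eps (LLx eps j x y)) (fun j x y => Cmul eps (MM eps j x y))).
        * intro j. exact (S_scale eps _ _ _ (LL_smooth eps j)).
        * exact (proj1 (H1 k Hk) t Ht).
        * exact (proj1 (H2 k Hk) t Ht).
        * exact Hk.
      + cbv beta. rewrite upd_same. reflexivity.
    - intros h Hh. apply (Crit _ (Hr2 _ (near_upd m r t k h Hr Hh))). }
  assert (Ey : forall k, (k <= m)%nat ->
    Cadd (F1 eps k x y)
      (Cadd (Cmul (Pxy eps m t x y) (dt u1 k t)) (Cmul (Pyy eps m t x y) (dt u2 k t))) = Czero).
  { intros k Hk.
    eapply (deriv_zero_local
      (fun s => Csum (fun j => Cmul (upd t k s j)
          (F1 eps j (u1 (upd t k s)) (u2 (upd t k s)))) (S m))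
      (t k) _ r Hr).
    - eapply Cderiv_eqL.
      + apply (chain_sum t k m (F1 eps) (Fx eps) (Fy eps)).
        * intro j. exact (F_smooth eps j).
        * exact (proj1 (H1 k Hk) t Ht).
        * exact (proj1 (H2 k Hk) t Ht).
        * exact Hk.
      + cbv beta. rewrite upd_same. fold x y. f_equal. f_equal. f_equal.
        unfold Pxy. apply Csum_ext. intros. rewrite Fx_MM. reflexivity.
    - intros h Hh. apply (Crit _ (Hr2 _ (near_upd m r t k h Hr Hh))). }
  split; [|split].
  - intros k Hk. split.
    + apply (solve_lin (Pxx eps m t x y) eps).
      * auto.
      * assert (E := Ex 0%nat ltac:(lia)). rewrite LL_0, Pxy0 in E. rewrite <- E. ring.
      * assert (E := Ex k ltac:(lia)). rewrite Pxy0 in E. rewrite <- E. unfold LL. ring.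
    + apply (solve_lin (Pyy eps m t x y) Cone).
      * auto.
      * assert (E := Ey 0%nat ltac:(lia)). rewrite F0, Pxy0 in E. rewrite <- E. ring.
      * assert (E := Ey k ltac:(lia)). rewrite Pxy0 in E. rewrite <- E. unfold lam2. ring.
  - change (lam1 eps 1 x y) with (LL eps 1 x y). rewrite LL_S, LL_0, F1_1. ring.
  - unfold lam2. rewrite F1_1. reflexivity.
Qed.
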